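(* Let $\vec s=(s_1,\dots,s_k)\in\mathbb{Z}_+^k$ with $n=\sum_l s_l$, and let $\pi_1,\pi_2,\pi_3$ be three $\vec s$-multipermutations. Then there is a pair $i<j$ such that $\mathrm{LCS}(\pi_i,\pi_j)\geq n^{1/3}$.
   Context: For $\vec s=(s_1,\dots,s_k)\in\mathbb{Z}_+^k$, an $\vec s$-multipermutation is a word over the alphabet $\{1,\dots,k\}$ in which each letter $l$ appears exactly $s_l$ times; its length is $\sum_l s_l$. A common subsequence of two words is a word that is a subsequence (letters taken in order, not necessarily consecutive) of both; $\mathrm{LCS}(w,w')$ is the length of a longest common subsequence of $w$ and $w'$. *)

(* Defs.v *)
From mathcomp Require Import all_boot.
Set Implicit Arguments. Unset Strict Implicit. Unset Printing Implicit Defensive.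

(* Alphabet {1,...,k} is represented by 'I_k (letter l+1 <-> ordinal l).
   Words are sequences over 'I_k. *)

Definition multiperm (k : nat) (s : 'I_k -> nat) (w : seq 'I_k) : bool :=
  [forall l : 'I_k, count_mem l w == s l].

Definition common_subseq (T : eqType) (u w w' : seq T) : bool :=
  subseq u w && subseq u w'.

(* LCS w w' : length of a longest common subsequence.  Every subsequence of w
   is mask m w for some bit-mask m of length size w, so we maximise over those. *)
Definition LCS (T : eqType) (w w' : seq T) : nat :=
  \max_(m : (size w).-tuple bool | subseq (mask m w) w') size (mask m w).

(* Main.v *)
Require Import Defs.
From mathcomp Require Import all_boot.
Set Implicit Arguments. Unset Strict Implicit. Unset Printing Implicit Defensive.

Lemma subseq_nths (A : eqType) (d : A) (u : seq A) ps :
  sorted ltn ps -> all (fun i => i < size u) ps -> subseq (map (nth d u) ps) u.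
Proof.
move=> so al.
have -> : ps = filter (mem ps) (iota 0 (size u)).
  apply: (irr_sorted_eq ltn_trans ltnn so).
  - exact: (sorted_filter ltn_trans _ (iota_ltn_sorted 0 _)).
  - move=> i; rewrite mem_filter mem_iota /= add0n.
    apply/idP/andP => [h|[]//]; split=> //; exact: (allP al).
have e := mkseq_nth d u; rewrite /mkseq in e.
rewrite -[X in subseq _ X]e; exact/map_subseq/filter_subseq.
Qed.

Lemma lcs_ge (A : eqType) (c u w : seq A) :
  subseq c u -> subseq c w -> size c <= LCS u w.
Proof.
case/subseqP => m sm -> hw.
have t : size m == size u by apply/eqP.
exact: (leq_bigmax_cond (Tuple t) hw).
Qed.

Lemma chain_lcs (A : eqType) (T : finType) (u w : seq A) (p q : T -> nat)
  (lt : T -> A) (S : {set T}) :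
  injective p -> (forall x, p x < size u) -> (forall x, q x < size w) ->
  (forall x, nth (lt x) u (p x) = lt x) -> (forall x, nth (lt x) w (q x) = lt x) ->
  (forall x y, x \in S -> y \in S -> p x < p y -> q x < q y) -> #|S| <= LCS u w.
Proof.
move=> pinj pu qw nu nw ch.
case: (set_0Vmem S) => [->|[x0 _]]; first by rewrite cards0.
set L := sort (relpre p leq) (enum S).
have sL : sorted (relpre p leq) L by apply: sort_sorted => x y; exact: leq_total.
have uL : uniq (map p L) by rewrite (map_inj_uniq pinj) sort_uniq enum_uniq.
have sp : sorted ltn (map p L) by rewrite ltn_sorted_uniq_leq uL sorted_map.
have aL : all (mem S) L by apply/allP => x; rewrite mem_sort mem_enum.
have sq : sorted ltn (map q L).
  rewrite sorted_map; rewrite sorted_map in sp.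
  apply: (sub_in_sorted _ aL sp) => x y xS yS /=; exact: ch.
have eqc : forall (v : seq A) (r : T -> nat), (forall x, r x < size v) ->
    (forall x, nth (lt x) v (r x) = lt x) -> map lt L = map (nth (lt x0) v) (map r L).
  move=> v r rv nv; rewrite -map_comp; apply: eq_map => x /=.
  by rewrite (set_nth_default (lt x) _ (rv x)) nv.
have -> : #|S| = size (map lt L) by rewrite size_map size_sort cardE.
apply: lcs_ge.
- rewrite (eqc u p pu nu); apply: subseq_nths => //.
  by apply/allP=> i /mapP [x _ ->]; exact: pu.
- rewrite (eqc w q qw nw); apply: subseq_nths => //.
  by apply/allP=> i /mapP [x _ ->]; exact: qw.
Qed.

Section Count.
Variable T : finType.

Definition chainb (p q : T -> nat) (S : {set T}) :=
  [forall x in S, [forall y in S, (p x < p y) ==> (q x < q y)]].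

Lemma chainP p q (S : {set T}) :
  reflect (forall x y, x \in S -> y \in S -> p x < p y -> q x < q y) (chainb p q S).
Proof.
apply: (iffP idP) => [/forall_inP h x y xS yS|h].
  by move/forall_inP: (h x xS) => /(_ y yS) /implyP.
apply/forall_inP => x xS; apply/forall_inP => y yS; apply/implyP; exact: h.
Qed.

Definition vv p q x := \max_(S : {set T} | chainb p q S && (x \in S) &&
   [forall y in S, p y <= p x]) #|S|.

Lemma vv_ge1 p q x : 0 < vv p q x.
Proof.
suff : #|[set x]| <= vv p q x by rewrite cards1.
rewrite /vv; apply: leq_bigmax_cond.
  rewrite set11 andbT; apply/andP; split.
    by apply/chainP => a b /set1P -> /set1P ->; rewrite ltnn.
by apply/forall_inP => y /set1P ->.
Qed.

Lemma vv_le p q x B : (forall S, chainb p q S -> #|S| <= B) -> vv p q x <= B.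
Proof. by move=> h; apply/bigmax_leqP => S /andP [/andP [c _] _]; exact: h. Qed.

Lemma vv_lt p q x y : injective p -> p x < p y -> q x < q y -> vv p q x < vv p q y.
Proof.
move=> pinj pxy qxy.
have h1 := vv_ge1 p q y.
suff : vv p q x <= (vv p q y).-1 by rewrite -ltnS prednK.
apply/bigmax_leqP => S /andP [/andP [/chainP c xS] /forall_inP le].
have yS : y \notin S by apply/negP => /le; rewrite leqNgt pxy.
rewrite -ltnS prednK // -add1n -[1]/(nat_of_bool true) -yS -cardsU1.
apply: leq_bigmax_cond; rewrite setU11 andbT; apply/andP; split.
  apply/chainP => a b /setU1P [-> | aS] /setU1P [-> | bS].
  - by rewrite ltnn.
  - by move=> h; move: (le b bS); rewrite leqNgt (ltn_trans pxy h).
  - move=> _; case: (eqVneq a x) => [->//|ax].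
    have pax : p a < p x by rewrite ltn_neqAle le // andbT; apply: contra ax => /eqP/pinj ->.
    exact: ltn_trans (c _ _ aS xS pax) qxy.
  - exact: c.
apply/forall_inP => z /setU1P [->//|zS].
by apply: leq_trans (le z zS) _; apply: ltnW.
Qed.

Variables pa pb pc : T -> nat.
Hypotheses (ia : injective pa) (ib : injective pb) (ic : injective pc).

Definition F x := (vv pa pb x, vv pa pc x, vv pb pc x).

Lemma F_key x y : pa x < pa y -> F x != F y.
Proof.
move=> hxy; rewrite /F.
case: (ltngtP (pb x) (pb y)) => hb.
- by apply/negP => /eqP [e _ _]; move: (vv_lt ia hxy hb); rewrite e ltnn.
- case: (ltngtP (pc x) (pc y)) => hc.
  + by apply/negP => /eqP [_ e _]; move: (vv_lt ia hxy hc); rewrite e ltnn.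
  + by apply/negP => /eqP [_ _ e]; move: (vv_lt ib hb hc); rewrite e ltnn.
  + by move: hxy; rewrite (ic hc) ltnn.
- by move: hxy; rewrite (ib hb) ltnn.
Qed.

Lemma F_inj : injective F.
Proof.
move=> x y e; apply/eqP/negPn/negP => nxy.
case: (ltngtP (pa x) (pa y)) => h.
- by move: (F_key h); rewrite e eqxx.
- by move: (F_key h); rewrite e eqxx.
- by move: nxy; rewrite (ia h) eqxx.
Qed.

Lemma count_bound B : (forall x, vv pa pb x <= B) -> (forall x, vv pa pc x <= B) ->
  (forall x, vv pb pc x <= B) -> #|T| <= B ^ 3.
Proof.
move=> h1 h2 h3.
case: (posnP #|T|) => [->//|/card_gt0P [x0 _]].
have : 0 < B by apply: leq_trans (vv_ge1 pa pb x0) (h1 x0).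
case: B h1 h2 h3 => // B h1 h2 h3 _.
pose G x : 'I_B.+1 * 'I_B.+1 * 'I_B.+1 :=
  (inord (vv pa pb x).-1, inord (vv pa pc x).-1, inord (vv pb pc x).-1).
have Ginj : injective G.
  move=> x y [e1 e2 e3]; apply: F_inj; rewrite /F.
  have K : forall p q z, vv p q z <= B.+1 -> (inord (vv p q z).-1 : 'I_B.+1) = (vv p q z).-1 :> nat.
    by move=> p q z h; rewrite inordK // prednK ?vv_ge1.
  have E : forall p q, vv p q x <= B.+1 -> vv p q y <= B.+1 ->
      (inord (vv p q x).-1 : 'I_B.+1) = inord (vv p q y).-1 -> vv p q x = vv p q y.
    move=> p q hx hy /(congr1 (@nat_of_ord _)); rewrite !K // => /eqP.
    by rewrite -eqSS !prednK ?vv_ge1 // => /eqP.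
  by rewrite (E _ _ (h1 x) (h1 y) e1) (E _ _ (h2 x) (h2 y) e2) (E _ _ (h3 x) (h3 y) e3).
by have := leq_card _ Ginj; rewrite !card_prod card_ord expnS expnS expn1 mulnA.
Qed.

End Count.

Section Pos.
Variable A : eqType.

Definition posf (w : seq A) (l : A) (r : nat) : nat :=
  find (fun i => (nth l w i == l) && (count_mem l (take i w) == r)) (iota 0 (size w)).

Lemma occ_ex (w : seq A) l r : r < count_mem l w ->
  exists i, [/\ i < size w, nth l w i = l & count_mem l (take i w) = r].
Proof.
elim: w r => [|a w IH] r //=.
case: (eqVneq a l) => [->|al] /=.
  case: r => [_|r]; first by exists 0; split => //; rewrite take0.
  rewrite add1n ltnS => /IH [i [h1 h2 h3]].
  by exists i.+1; rewrite /= eqxx h3.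
rewrite add0n => /IH [i [h1 h2 h3]].
by exists i.+1; rewrite /= (negbTE al) h3.
Qed.

Lemma posf_spec w l r : r < count_mem l w ->
  [/\ posf w l r < size w, nth l w (posf w l r) = l &
      count_mem l (take (posf w l r) w) = r].
Proof.
move=> /occ_ex [i [h1 h2 h3]].
set a := (fun i => (nth l w i == l) && (count_mem l (take i w) == r)).
have ha : has a (iota 0 (size w)).
  by apply/hasP; exists i; rewrite ?mem_iota //= /a h2 h3 !eqxx.
have hf := ha; rewrite has_find size_iota in hf.
have := nth_find 0 ha; rewrite nth_iota // add0n => /andP [/eqP e1 /eqP e2].
by split.
Qed.

End Pos.

Theorem lemma5 (k : nat) (s : 'I_k -> nat) (s_pos : forall l, 0 < s l)
    (pi1 pi2 pi3 : seq 'I_k) :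
  multiperm s pi1 -> multiperm s pi2 -> multiperm s pi3 ->
  let n := \sum_(l < k) s l in
  let pi := [:: pi1; pi2; pi3] in
  exists i j : nat, [/\ i < j, j < 3 &
    n <= (LCS (nth [::] pi i) (nth [::] pi j)) ^ 3].
Proof.
move=> h1 h2 h3 n pi.
pose T : finType := {l : 'I_k & 'I_(s l)}.
have cnt : forall w, multiperm s w -> forall x : T, tagged x < count_mem (tag x) w.
  by move=> w /forallP hw x; rewrite (eqP (hw (tag x))); exact: ltn_ord.
pose pos (w : seq 'I_k) (x : T) := posf w (tag x) (tagged x).
have P1 : forall w, multiperm s w -> forall x, pos w x < size w.
  by move=> w hw x; case: (posf_spec (cnt w hw x)).
have P2 : forall w, multiperm s w -> forall x, nth (tag x) w (pos w x) = tag x.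
  by move=> w hw x; case: (posf_spec (cnt w hw x)).
have Pinj : forall w, multiperm s w -> injective (pos w).
  move=> w hw x y e.
  have [a1 a2 a3] := posf_spec (cnt w hw x).
  have [b1 b2 b3] := posf_spec (cnt w hw y).
  rewrite -/(pos w x) e in a1 a2 a3.
  have el : tag x = tag y by rewrite -{1}a2 (set_nth_default (tag y)) // b2.
  have er : tagged x = tagged y :> nat by rewrite -a3 -b3 el.
  clear -el er; case: x y el er => [l r] [l' r'] /= el; subst l' => /val_inj -> //.
have V : forall u v, multiperm s u -> multiperm s v ->
    forall x, vv (pos u) (pos v) x <= LCS u v.
  move=> u v hu hv x; apply: vv_le => S /chainP ch.
  exact: (chain_lcs (lt := tag) (Pinj u hu) (P1 u hu) (P1 v hv) (P2 u hu) (P2 v hv) ch).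
set B := maxn (LCS pi1 pi2) (maxn (LCS pi1 pi3) (LCS pi2 pi3)).
have hn : n <= B ^ 3.
  have -> : n = #|T|.
    by rewrite card_tagged sumnE big_map big_enum /=; apply: eq_bigr => i _; rewrite card_ord.
  apply: (count_bound (Pinj _ h1) (Pinj _ h2) (Pinj _ h3)) => x.
  - by apply: leq_trans (V _ _ h1 h2 x) _; rewrite leq_maxl.
  - by apply: leq_trans (V _ _ h1 h3 x) _; rewrite /B (maxnC _ (LCS pi2 pi3)) maxnA leq_maxr.
  - by apply: leq_trans (V _ _ h2 h3 x) _; rewrite /B maxnA leq_maxr.
move: hn; rewrite /B /maxn.
case: ltnP => _; [case: ltnP => _|] => hn.
- by exists 1, 2.
- by exists 0, 2.
- by exists 0, 1.
Qed.
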